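(* Let $k\ge 2$ and $n\ge 2k$ be integers. The Kneser graph $\mathrm{KG}(n,k)$ satisfies $\alpha_{\mathrm{od}}(\mathrm{KG}(n,k))=\alpha(\mathrm{KG}(n,k))$ if and only if $\binom{n-k-1}{k-1}$ is odd. Equivalently, $\alpha_{\mathrm{od}}(\mathrm{KG}(n,k))=\alpha(\mathrm{KG}(n,k))$ if and only if $\binom{n-1}{k-1}\not\equiv \sum_{t=1}^{k}\binom{k}{t}\binom{n-k-1}{k-1-t} \pmod 2$.
   Context: The Kneser graph $\mathrm{KG}(n,k)$ has as vertices the $k$-element subsets of an $n$-element set, two being adjacent iff they are disjoint. An odd independent set in a graph $G=(V,E)$ is an independent set $S$ such that every $v\in V\setminus S$ has either no neighbor or an odd number of neighbors in $S$. $\alpha_{\mathrm{od}}(G)$ is the maximum size of an odd independent set; $\alpha(G)$ is the independence number. *)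

(* Defs.v *)
From mathcomp Require Import all_boot.
Set Implicit Arguments. Unset Strict Implicit. Unset Printing Implicit Defensive.

Section Graphs.
Variables (V : finType) (adj : rel V).

Definition independent (S : {set V}) : bool :=
  [forall x in S, forall y in S, ~~ adj x y].

Definition odd_independent (S : {set V}) : bool :=
  independent S &&
  [forall v in ~: S,
     (#|[set u in S | adj v u]| == 0) || odd #|[set u in S | adj v u]|].

Definition alpha : nat := \max_(S : {set V} | independent S) #|S|.
Definition alpha_od : nat := \max_(S : {set V} | odd_independent S) #|S|.
End Graphs.

Definition KGV (n k : nat) := {A : {set 'I_n} | #|A| == k}.
Definition KGadj (n k : nat) : rel (KGV n k) :=
  fun A B => [disjoint val A & val B].

(* Main.v *)
Require Import Defs.
From mathcomp Require Import all_boot all_fingroup zify.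
Set Implicit Arguments. Unset Strict Implicit. Unset Printing Implicit Defensive.

Definition dd (n : nat) (a b : 'I_n) : nat := (b + (n - a)) %% n.

Lemma ddE n (a b : 'I_n) : dd a b = if a <= b then b - a else b + n - a.
Proof.
have ha := ltn_ord a; have hb := ltn_ord b.
rewrite /dd; case: leqP => h.
  have -> : b + (n - a) = (b - a) + n by lia.
  by rewrite modnDr modn_small; lia.
by rewrite modn_small; lia.
Qed.

Definition Wn (n k : nat) (t : 'I_n) : {set 'I_n} := [set i | dd t i < k].

Lemma mod2cases x m : x < m + m -> x = x %% m \/ x = m + x %% m.
Proof.
move=> h; have e := divn_eq x m.
have : x %/ m < 2.
  case: m h e => [|m] h e; first by lia.
  by rewrite ltn_divLR //; lia.
move: e; set q := x %/ m; set r := x %% m.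
case: q => [|[|q]] //= e _; [left|right]; lia.
Qed.

Lemma W_disj n k (t1 t2 : 'I_n) :
  k <= dd t1 t2 <= n - k -> [disjoint Wn k t1 & Wn k t2].
Proof.
move=> h; apply/pred0P => i /=; rewrite !inE; apply/negP => /andP [].
move: h; rewrite !ddE.
have := ltn_ord t1; have := ltn_ord t2; have := ltn_ord i.
case: (leqP t1 t2); case: (leqP t1 i); case: (leqP t2 i); lia.
Qed.

Lemma dd_inj n (s t1 t2 : 'I_n) : dd s t1 = dd s t2 -> t1 = t2.
Proof.
rewrite !ddE => h; apply: val_inj => /=.
move: h; have := ltn_ord t1; have := ltn_ord t2; have := ltn_ord s.
case: (leqP s t1); case: (leqP s t2); lia.
Qed.

Lemma W_inj n k m (s t1 t2 : 'I_n) :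
  k <= m -> m <= n - k ->
  dd s t1 < m + m -> dd s t2 < m + m ->
  dd s t1 %% m = dd s t2 %% m ->
  ~~ [disjoint Wn k t1 & Wn k t2] -> t1 = t2.
Proof.
move=> h1 h2 l1 l2 e nd.
have [c1|c1] := mod2cases l1; have [c2|c2] := mod2cases l2.
- by apply: (@dd_inj _ s); lia.
- suff : [disjoint Wn k t1 & Wn k t2] by rewrite (negbTE nd).
  apply: W_disj; move: c1 c2 e; rewrite !ddE.
  have := ltn_ord t1; have := ltn_ord t2; have := ltn_ord s.
  case: (leqP s t1); case: (leqP s t2); case: (leqP t1 t2); lia.
- suff : [disjoint Wn k t2 & Wn k t1] by rewrite disjoint_sym (negbTE nd).
  apply: W_disj; move: c1 c2 e; rewrite !ddE.
  have := ltn_ord t1; have := ltn_ord t2; have := ltn_ord s.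
  case: (leqP s t1); case: (leqP s t2); case: (leqP t2 t1); lia.
- by apply: (@dd_inj _ s); lia.
Qed.

Lemma card_inj_bound (T : finType) (A : {set T}) (f : T -> nat) (s : seq nat) :
  {in A &, injective f} -> (forall t, t \in A -> f t \in s) -> #|A| <= size s.
Proof.
move=> fi fs; rewrite cardE -(size_map f); apply: uniq_leq_size.
- rewrite map_inj_in_uniq ?enum_uniq // => x y; rewrite !mem_enum; exact: fi.
- by move=> y /mapP [x]; rewrite mem_enum => /fs h ->.
Qed.

Lemma dd_lt n (a b : 'I_n) : dd a b < n.
Proof. rewrite ddE; have := ltn_ord a; have := ltn_ord b; case: (leqP a b); lia. Qed.

Definition inter_w n k (T : {set 'I_n}) :=
  forall t1 t2, t1 \in T -> t2 \in T -> ~~ [disjoint Wn k t1 & Wn k t2].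

Lemma near_w n k (s t : 'I_n) : ~~ [disjoint Wn k s & Wn k t] ->
  dd s t < k \/ n - k < dd s t.
Proof.
move=> h; case: (ltnP (dd s t) k) => h1; first by left.
case: (leqP (dd s t) (n - k)) => h2; last by right.
by rewrite W_disj ?h1 ?h2 in h.
Qed.

Lemma L1 n k (T : {set 'I_n}) : 0 < k -> k + k <= n -> inter_w k T -> #|T| <= k.
Proof.
move=> k0 nk iT; have [->|[s sT]] := set_0Vmem T; first by rewrite cards0.
set m := n - k.
rewrite -(size_iota 0 k); apply: (@card_inj_bound _ _ (fun t => dd s t %% m)).
- move=> t1 t2 h1 h2 e; apply: (@W_inj n k m s) => //; try lia.
  + by have := dd_lt s t1; lia.
  + by have := dd_lt s t2; lia.
  + exact: iT.
- move=> t tT; rewrite mem_iota add0n; have := dd_lt s t.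
  have [h|h] := near_w (iT _ _ sT tT).
  + by rewrite modn_small; lia.
  + move=> hl; have hm : 0 < m by lia.
    have := ltn_pmod (dd s t) hm.
    have [e|e] := @mod2cases (dd s t) m ltac:(lia); lia.
Qed.

Lemma L2 n k (T : {set 'I_n}) (s : 'I_n) : 1 < k -> k + k < n -> inter_w k T ->
  s \in T -> (forall t, t \in T -> (dd s t != 1) && (dd s t != n.-1)) ->
  #|T| <= k.-1.
Proof.
move=> k0 nk iT sT hT.
set m := n - k - 1.
have -> : k.-1 = size (0 :: iota 2 (k - 2)) by rewrite /= size_iota; lia.
apply: (@card_inj_bound _ _ (fun t => dd s t %% m)).
- move=> t1 t2 h1 h2 e; apply: (@W_inj n k m s) => //; try lia.
  + by have := dd_lt s t1; have := hT _ h1; case/andP => /eqP ? /eqP ?; lia.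
  + by have := dd_lt s t2; have := hT _ h2; case/andP => /eqP ? /eqP ?; lia.
  + exact: iT.
- move=> t tT; rewrite inE mem_iota; have := dd_lt s t.
  have := hT _ tT; case/andP => /eqP ? /eqP ?.
  have [h|h] := near_w (iT _ _ sT tT).
  + by rewrite modn_small; lia.
  + move=> hl; have hm : 0 < m by lia.
    have := ltn_pmod (dd s t) hm.
    have [e|e] := @mod2cases (dd s t) m ltac:(lia); lia.
Qed.

Lemma perm_exists n (X Y : {set 'I_n}) : #|X| = #|Y| ->
  exists s : {perm 'I_n}, s @: X = Y.
Proof.
move e : #|X :\: Y| => m; elim: m X e => [|m IH] X e hXY.
  exists 1%g; rewrite (eq_imset _ (fun x => perm1 x)) imset_id.
  apply/eqP; rewrite eqEcard hXY leqnn andbT.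
  by move/eqP: e; rewrite cards_eq0 setD_eq0.
have : 0 < #|X :\: Y| by rewrite e.
case/card_gt0P => x; rewrite inE => /andP [xY xX].
have : 0 < #|Y :\: X|.
  have := cardsD X Y; have := cardsD Y X; rewrite setIC; lia.
case/card_gt0P => y; rewrite inE => /andP [yX yY].
set X' := tperm x y @: X.
have hX' : #|X'| = #|Y| by rewrite card_imset //; exact: perm_inj.
have eX' : X' = (X :\ x) :|: [set y].
  apply/setP => z; rewrite !inE; apply/imsetP/idP.
  - case=> w wX ->; case: tpermP => [_|ew|/eqP h1 h2].
    + by rewrite eqxx orbT.
    + by rewrite ew (negbTE yX) in wX.
    + by rewrite wX andbT h1.
  - case/orP => [/andP [zx zX]|/eqP ->].
    + exists z => //; rewrite tpermD //; first by rewrite eq_sym.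
      by apply/eqP => h; move: yX; rewrite h zX.
    + by exists x => //; rewrite tpermL.
have : #|X' :\: Y| = m.
  suff -> : X' :\: Y = (X :\: Y) :\ x by have := cardsD1 x (X :\: Y); rewrite e !inE xY xX /=; lia.
  rewrite eX'; apply/setP => z; rewrite !inE.
  case: (z =P y) => [->|_]; first by rewrite yY !andbF.
  by rewrite orbF; case: (z \in Y); case: (z == x).
case/IH => // s hs; exists (tperm x y * s)%g.
by rewrite -hs /X' -imset_comp; apply: eq_imset => z /=; rewrite permM.
Qed.

Definition cnt n (X A : {set 'I_n}) := #|[set p : {perm 'I_n} | p @: X == A]|.

Lemma permM_imset n (s t : {perm 'I_n}) (X : {set 'I_n}) :
  (s * t)%g @: X = t @: (s @: X).
Proof. by rewrite -imset_comp; apply: eq_imset => z /=; rewrite permM. Qed.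

Lemma cnt_le n (X Y A B : {set 'I_n}) : #|X| = #|Y| -> #|A| = #|B| ->
  cnt X A <= cnt Y B.
Proof.
move=> /esym /perm_exists [t ht] /perm_exists [r hr].
rewrite /cnt -(card_imset _ (f := fun p => (t * p * r)%g)); last first.
  by move=> p q /mulIg /mulgI.
apply: subset_leq_card; apply/subsetP => q /imsetP [p]; rewrite !inE => /eqP hp ->.
by rewrite !permM_imset ht hp hr.
Qed.

Lemma cnt_eq n (X Y A B : {set 'I_n}) : #|X| = #|Y| -> #|A| = #|B| ->
  cnt X A = cnt Y B.
Proof. by move=> h1 h2; apply/eqP; rewrite eqn_leq !cnt_le. Qed.

Lemma card_W n k (t : 'I_n) : k <= n -> #|Wn k t| = k.
Proof.
move=> kn; apply/eqP; rewrite eqn_leq; apply/andP; split.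
  rewrite -{2}(size_iota 0 k); apply: (@card_inj_bound _ _ (dd t)).
    by move=> x y _ _; apply: dd_inj.
  by move=> x; rewrite inE mem_iota.
have : #|~: Wn k t| <= n - k.
  rewrite -(size_iota k (n - k)); apply: (@card_inj_bound _ _ (dd t)).
    by move=> x y _ _; apply: dd_inj.
  by move=> x; rewrite !inE mem_iota -leqNgt => h; have := dd_lt t x; lia.
by have := cardsC (Wn k t); rewrite card_ord; lia.
Qed.

Definition NN n k (p : {perm 'I_n}) (F : {set {set 'I_n}}) :=
  #|[set t : 'I_n | p @: Wn k t \in F]|.

Lemma sum_eq1 (T : finType) (F : {set T}) (B : T) :
  \sum_(A in F) (B == A : nat) = (B \in F).
Proof.
case: (boolP (B \in F)) => BF.
  rewrite (bigD1 B) //= eqxx big1 // => A /andP [_ h]; by rewrite eq_sym (negbTE h).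
by rewrite big1 // => A AF; case: eqP => // h; rewrite h AF in BF.
Qed.

Lemma card_sum (T : finType) (P : pred T) : #|[set x | P x]| = \sum_x (P x : nat).
Proof.
rewrite -sum1_card big_mkcond /=; apply: eq_bigr => x _; rewrite inE.
by case: (P x).
Qed.

Lemma sumNN n k (t0 : 'I_n) (F : {set {set 'I_n}}) : k <= n ->
  (forall A, A \in F -> #|A| = k) ->
  \sum_(p : {perm 'I_n}) NN k p F = n * (#|F| * cnt (Wn k t0) (Wn k t0)).
Proof.
move=> kn hF.
rewrite /NN; under eq_bigr => p _ do rewrite card_sum.
rewrite exchange_big /=.
transitivity (\sum_(t < n) (#|F| * cnt (Wn k t0) (Wn k t0))); last first.
  by rewrite sum_nat_const card_ord.
apply: eq_bigr => t _.
rewrite -sum_nat_const.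
transitivity (\sum_(p : {perm 'I_n}) \sum_(A in F) (p @: Wn k t == A : nat)).
  by apply: eq_bigr => p _; rewrite sum_eq1.
rewrite exchange_big /=; apply: eq_bigr => A AF.
rewrite -card_sum; apply: cnt_eq; by rewrite !card_W // hF.
Qed.

Definition inter n (F : {set {set 'I_n}}) :=
  forall A B, A \in F -> B \in F -> ~~ [disjoint A & B].
Definition kfam n k (F : {set {set 'I_n}}) := forall A, A \in F -> #|A| = k.

Lemma disj_imset n (p : {perm 'I_n}) (X Y : {set 'I_n}) :
  [disjoint X & Y] -> [disjoint p @: X & p @: Y].
Proof.
rewrite -!setI_eq0 -imsetI; first by move/eqP->; rewrite imset0.
by move=> x y _ _; apply: perm_inj.
Qed.

Lemma NN_le n k (p : {perm 'I_n}) F : 0 < k -> k + k <= n -> inter F ->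
  NN k p F <= k.
Proof.
move=> k0 kn iF; apply: L1 => // t1 t2; rewrite !inE => h1 h2.
apply/negP => /(disj_imset p) h; by move: (iF _ _ h1 h2); rewrite h.
Qed.

Lemma NN_K n k (p : {perm 'I_n}) : k <= n ->
  NN k p [set A : {set 'I_n} | #|A| == k] = n.
Proof.
move=> kn; rewrite /NN -[RHS]card_ord -cardsT; apply: eq_card => t.
by rewrite !inE card_imset ?card_W ?eqxx //; apply: perm_inj.
Qed.

Lemma fact_cnt n k (t0 : 'I_n) : k <= n ->
  n`! = 'C(n, k) * cnt (Wn k t0) (Wn k t0).
Proof.
move=> kn; have n0 : 0 < n by case: n t0 {kn} => [[]|].
have := @sumNN n k t0 [set A : {set 'I_n} | #|A| == k] kn.
rewrite card_draws card_ord => h; move: h (h (fun A => ltac:(rewrite inE => /eqP; done))) => _.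
under eq_bigr => p _ do rewrite NN_K //.
rewrite sum_nat_const card_Sn => /eqP.
by rewrite mulnC eqn_pmul2l // => /eqP.
Qed.

Lemma EKR n k (F : {set {set 'I_n}}) : 0 < k -> k + k <= n -> inter F -> kfam k F ->
  #|F| <= 'C(n.-1, k.-1) /\
  (#|F| = 'C(n.-1, k.-1) -> forall p, NN k p F = k).
Proof.
move=> k0 kn iF kF.
have n0 : 0 < n by lia.
pose t0 : 'I_n := Ordinal n0.
set c := cnt (Wn k t0) (Wn k t0).
have hc := fact_cnt t0 (leq_trans (leq_addr k k) kn).
have hS := sumNN t0 (leq_trans (leq_addr k k) kn) kF.
have hle : \sum_(p : {perm 'I_n}) NN k p F <= n`! * k.
  rewrite -card_Sn -sum_nat_const; apply: leq_sum => p _; exact: NN_le.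
have hb : n * 'C(n.-1, k.-1) = k * 'C(n, k).
  by rewrite mul_bin_diag prednK.
have c0 : 0 < c by move: (fact_gt0 n); rewrite hc muln_gt0 => /andP [].
split.
  rewrite -(leq_pmul2l n0) hb -(leq_pmul2r c0).
  move: hle; rewrite hS hc; lia.
move=> eF p; apply/eqP; rewrite eqn_leq NN_le //=.
have : \sum_(p : {perm 'I_n}) (k - NN k p F) == 0.
  rewrite sumnB; last by move=> q _; exact: NN_le.
  rewrite sum_nat_const card_Sn hS eF mulnA hb hc; apply/eqP; lia.
rewrite sum_nat_eq0 => /forallP /(_ p) /=; by rewrite subn_eq0.
Qed.

Lemma imsetD1_perm n (p : {perm 'I_n}) (A : {set 'I_n}) a :
  p @: (A :\ a) = (p @: A) :\ p a.
Proof.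
apply/setP => z; rewrite !inE; apply/imsetP/andP.
- case=> w; rewrite !inE => /andP [wa wA] ->; split; last exact: imset_f.
  by apply: contra wa => /eqP /perm_inj ->.
- case=> za /imsetP [w wA ez]; exists w => //; rewrite !inE wA andbT.
  by apply: contra za => /eqP wa; rewrite ez wa.
Qed.

Lemma swap_imset n (p : {perm 'I_n}) (A : {set 'I_n}) a y :
  p @: ((A :\ a) :|: [set y]) = ((p @: A) :\ p a) :|: [set p y].
Proof. by rewrite imsetU imsetD1_perm imset_set1. Qed.

Lemma tperm_set n (A : {set 'I_n}) a b : (a \in A) = (b \in A) -> tperm a b @: A = A.
Proof.
move=> h; apply/eqP; rewrite eqEcard card_imset ?leqnn ?andbT; last exact: perm_inj.
apply/subsetP => _ /imsetP [w wA ->]; case: tpermP => [ew|ew|_ _] //.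
- by rewrite -h -ew.
- by rewrite h -ew.
Qed.

Lemma fixpos n (p : {perm 'I_n}) (X A : {set 'I_n}) (q z : 'I_n) :
  p @: X = A -> (q \in X) = (z \in A) ->
  exists p' : {perm 'I_n}, [/\ p' q = z, p' @: X = A &
      forall r, r != q -> p r != z -> p' r = p r].
Proof.
move=> hA hq; exists (p * tperm (p q) z)%g; split.
- by rewrite permM tpermL.
- rewrite permM_imset hA tperm_set // -hq -hA mem_imset //; exact: perm_inj.
- move=> r rq rz; rewrite permM tpermD // ?(eq_sym z) //.
  by apply: contra rq => /eqP /perm_inj ->.
Qed.

Lemma mem_W n k (t i : 'I_n) : (i \in Wn k t) = (dd t i < k).
Proof. by rewrite inE. Qed.

Lemma G2 n k (F : {set {set 'I_n}}) A x1 x2 y1 y2 :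
  1 < k -> k + k < n -> inter F -> kfam k F -> #|F| = 'C(n.-1, k.-1) ->
  A \in F -> x1 \in A -> x2 \in A -> x1 != x2 -> y1 \notin A -> y2 \notin A ->
  y1 != y2 ->
  ((A :\ x1) :|: [set y1]) \in F \/ ((A :\ x2) :|: [set y2]) \in F.
Proof.
move=> k1 kn.
have h0 : 0 < n by lia. have h1 : 1 < n by lia. have h2 : 2 < n by lia.
have hk : k < n by lia. have hk1 : k.+1 < n by lia.
pose o0 := Ordinal h0; pose o1 := Ordinal h1; pose o2 := Ordinal h2.
pose ok := Ordinal hk; pose ok1 := Ordinal hk1.
have W1m : forall i : 'I_n, (i \in Wn k o1) = (1 <= i <= k).
  move=> i; rewrite mem_W ddE /=; case: ifP => ?; lia.
have W2e : Wn k o2 = (Wn k o1 :\ o1) :|: [set ok1].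
  apply/setP => i; rewrite in_setU in_setD1 in_set1 W1m mem_W ddE -!val_eqE /=.
  case: ifP => ?; lia.
have W0e : Wn k o0 = (Wn k o1 :\ ok) :|: [set o0].
  apply/setP => i; rewrite in_setU in_setD1 in_set1 W1m mem_W ddE -!val_eqE /=.
  lia.
have ne : forall a b : 'I_n, val a != val b -> a != b.
  by move=> a b; apply: contra => /eqP ->.
have d1 : o1 != ok by apply: ne => /=; lia.
have d2 : o1 != ok1 by apply: ne => /=; lia.
have d3 : ok != ok1 by apply: ne => /=; lia.
have d4 : o1 != o0 by apply: ne => /=; lia.
have d5 : ok != o0 by apply: ne => /=; lia.
have d6 : ok1 != o0 by apply: ne => /=; lia.
have w1 : o1 \in Wn k o1 by rewrite W1m /=; lia.
have wk : ok \in Wn k o1 by rewrite W1m /=; lia.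
have wk1 : ok1 \notin Wn k o1 by rewrite W1m /=; lia.
have w0 : o0 \notin Wn k o1 by rewrite W1m /=; lia.
have dd2 : dd o1 o2 = 1 by rewrite ddE /=.
have dd0 : dd o1 o0 = n.-1 by rewrite ddE /=; lia.
move=> iF kF eF AF x1A x2A x12 y1A y2A y12.
have [s0 hs0] := @perm_exists n (Wn k o1) A ltac:(by rewrite (kF _ AF) card_W // ltnW).
have [p1 [a1 b1 c1]] := @fixpos n s0 _ _ o1 x1 hs0 ltac:(by rewrite w1 x1A).
have [p2 [a2 b2 c2]] := @fixpos n p1 _ _ ok x2 b1 ltac:(by rewrite wk x2A).
have [p3 [a3 b3 c3]] := @fixpos n p2 _ _ ok1 y1 b2 ltac:(by rewrite (negbTE wk1) (negbTE y1A)).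
have [p4 [a4 b4 c4]] := @fixpos n p3 _ _ o0 y2 b3 ltac:(by rewrite (negbTE w0) (negbTE y2A)).
have xy : forall x y, x \in A -> y \notin A -> x != y.
  by move=> x y xA; apply: contra => /eqP <-.
have e1 := xy _ _ x1A y1A. have e2 := xy _ _ x2A y1A.
have e3 := xy _ _ x1A y2A. have e4 := xy _ _ x2A y2A.
have q2 : p2 o1 = x1 by rewrite c2 ?a1.
have q3 : p3 o1 = x1 by rewrite c3 ?q2.
have q3k : p3 ok = x2 by rewrite c3 ?a2.
have r1 : p4 o1 = x1 by rewrite c4 ?q3.
have rk : p4 ok = x2 by rewrite c4 ?q3k.
have rk1 : p4 ok1 = y1 by rewrite c4 ?a3.
set T := [set t | p4 @: Wn k t \in F].
have cT : #|T| = k by have [_ h] := EKR (ltnW k1) (ltnW kn) iF kF; exact: h eF p4.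
have o1T : o1 \in T by rewrite inE b4.
have [o2T|o2T] := boolP (o2 \in T).
  by left; move: o2T; rewrite inE W2e swap_imset b4 r1 rk1.
have [o0T|o0T] := boolP (o0 \in T).
  by right; move: o0T; rewrite inE W0e swap_imset b4 rk a4.
suff : #|T| <= k.-1 by rewrite cT; clear -k1; lia.
apply: (@L2 n k T o1) => //.
- move=> t1 t2; rewrite !inE => h1' h2'.
  apply/negP => /(disj_imset p4) h; by move: (iF _ _ h1' h2'); rewrite h.
- move=> t tT; apply/andP; split.
  + apply: contra o2T => /eqP e.
    have : dd o1 t = dd o1 o2 by rewrite e dd2.
    by move/dd_inj <-.
  + apply: contra o0T => /eqP e.
    have : dd o1 t = dd o1 o0 by rewrite e dd0.
    by move/dd_inj <-.
Qed.

Ltac clear_all := repeat match goal with H : _ |- _ => clear H end.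
Ltac clia := clear_all; lia.

Definition swp n (A : {set 'I_n}) x y := (A :\ x) :|: [set y].

Definition G2prop n (F : {set {set 'I_n}}) :=
  forall A x1 x2 y1 y2, A \in F -> x1 \in A -> x2 \in A -> x1 != x2 ->
  y1 \notin A -> y2 \notin A -> y1 != y2 ->
  swp A x1 y1 \in F \/ swp A x2 y2 \in F.

Lemma in_swp n (A : {set 'I_n}) x y z : (z \in swp A x y) = (z == y) || ((z != x) && (z \in A)).
Proof. by rewrite !inE orbC. Qed.

Lemma comp_card n (A B : {set 'I_n}) :
  #|~: (A :|: B)| + #|A| + #|B| = n + #|A :&: B|.
Proof. have := cardsC (A :|: B); have := cardsUI A B; rewrite card_ord; lia. Qed.

Lemma two_out n (C : {set 'I_n}) : 1 < #|~: C| ->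
  exists y1 y2, [/\ y1 \notin C, y2 \notin C & y1 != y2].
Proof.
by case/card_gt1P => y1 [y2 [h1 h2 h3]]; exists y1, y2; rewrite !inE in h1 h2.
Qed.

Lemma one_out n (C : {set 'I_n}) y : 1 < #|~: C| -> exists y', y' \notin C /\ y' != y.
Proof.
case/two_out => y1 [y2 [h1 h2 h3]].
case: (y1 =P y) => [e|/eqP ne]; last by exists y1.
by exists y2; split => //; rewrite -e eq_sym.
Qed.

Definition uq n (A B : {set 'I_n}) x :=
  [/\ x \in A, x \in B & forall z, z \in A -> z \in B -> z = x].

Lemma uq_sym n (A B : {set 'I_n}) x : uq A B x -> uq B A x.
Proof. by case=> h1 h2 h3; split => // z z1 z2; apply: h3. Qed.

Lemma uq_card n (A B : {set 'I_n}) x : uq A B x -> #|A :&: B| = 1.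
Proof.
case=> h1 h2 h3; apply/eqP/cards1P; exists x; apply/setP => z; rewrite !inE.
apply/andP/eqP => [[]|->]; [exact: h3 | by split].
Qed.

Lemma Kl n k (F : {set {set 'I_n}}) A B x a y :
  k + k < n -> inter F -> kfam k F -> G2prop F ->
  A \in F -> B \in F -> uq A B x -> a \in A -> a != x -> y \notin A ->
  swp A a y \in F.
Proof.
move=> kn iF kF Gp AF BF u aA ax yA.
have c2 : 1 < #|~: (A :|: B)|.
  have := comp_card A B; rewrite (uq_card u) (kF _ AF) (kF _ BF); move: (kn); clia.
have [y' [y'AB y'y]] := one_out y c2.
move: y'AB; rewrite in_setU negb_or => /andP [y'A y'B].
case: u => xA xB ux.
have [h|//] := Gp A x a y' y AF xA aA ltac:(by rewrite eq_sym ax) y'A yA y'y.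
have := iF _ _ h BF; case/negP; apply/pred0P => z /=; rewrite in_swp.
apply/negP => /andP [/orP [/eqP ->|/andP [zx zA]] zB].
  by rewrite zB in y'B.
by rewrite (ux z zA zB) eqxx in zx.
Qed.

Lemma grow n k (F : {set {set 'I_n}}) x :
  k + k < n -> inter F -> kfam k F -> G2prop F ->
  forall m A B D, #|D :\: A| = m -> A \in F -> B \in F -> uq A B x ->
  x \in D -> #|D| = k -> D \in F.
Proof.
move=> kn iF kF Gp; elim=> [|m IH] A B D hm AF BF u xD Dk.
  suff -> : D = A by [].
  apply/eqP; rewrite eqEcard Dk (kF _ AF) leqnn andbT.
  by move/eqP: hm; rewrite cards_eq0 setD_eq0.
have : 0 < #|D :\: A| by rewrite hm.
case/card_gt0P => y; rewrite inE => /andP [yA yD].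
have : 0 < #|A :\: D|.
  have := cardsD D A; have := cardsD A D; rewrite setIC Dk (kF _ AF) hm; clia.
case/card_gt0P => a; rewrite inE => /andP [aD aA].
have ax : a != x by apply: contra aD => /eqP ->.
have A'F : swp A a y \in F := Kl kn iF kF Gp AF BF u aA ax yA.
have hm' : #|D :\: swp A a y| = m.
  suff -> : D :\: swp A a y = (D :\: A) :\ y.
    by have := cardsD1 y (D :\: A); rewrite hm !inE yA yD /=; clia.
  apply/setP => z; rewrite !inE.
  case: (z =P y) => [->|/eqP zy]; first by rewrite orbT.
  rewrite orbF /=.
  case: (z =P a) => [->|/eqP za]; first by rewrite (negbTE aD) aA !andbF.
  by rewrite ?za.
case: u => xA xB ux.
have xa : x != a by rewrite eq_sym.
have xA' : x \in swp A a y by rewrite in_swp xA xa orbT.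
have [yB|yB] := boolP (y \in B); last first.
  apply: (IH (swp A a y) B) => //; split => // z; rewrite in_swp.
  case/orP => [/eqP -> /(negP yB)//|/andP [_ zA] zB]; exact: ux.
have c1 : 0 < #|~: (A :|: B)|.
  have := comp_card A B; rewrite (@uq_card _ A B x) ?(kF _ AF) ?(kF _ BF) //; move: (kn); clia.
case/card_gt0P: c1 => z0; rewrite !inE negb_or => /andP [z0A z0B].
have yx : y != x by apply: contra yA => /eqP ->.
have B'F : swp B y z0 \in F.
  exact: (Kl kn iF kF Gp BF AF (uq_sym (And3 xA xB ux)) yB yx z0B).
apply: (IH (swp A a y) (swp B y z0)) => //; split => //.
  by rewrite in_swp xB andbT (eq_sym x y) yx orbT.
move=> z; rewrite !in_swp.
case/orP => [/eqP ->|/andP [_ zA]].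
  case/orP => [/eqP e|/andP [/eqP //]].
  by move: z0B; rewrite -e yB.
case/orP => [/eqP e|/andP [_ zB]]; last exact: ux.
by move: z0A; rewrite -e zA.
Qed.

Lemma swp_inter n (A B : {set 'I_n}) x y :
  x \in A -> x \in B -> y \notin B -> #|swp A x y :&: B| < #|A :&: B|.
Proof.
move=> xA xB yB.
have sub : swp A x y :&: B \subset (A :&: B) :\ x.
  apply/subsetP => z; rewrite inE in_swp !inE => /andP [/orP [/eqP ->|/andP [zx zA]] zB].
    by rewrite zB in yB.
  by rewrite zx zA zB.
have := subset_leq_card sub; have := cardsD1 x (A :&: B); rewrite !inE xA xB /=.
clia.
Qed.

Lemma star n k (F : {set {set 'I_n}}) A0 : 1 < k -> k + k < n -> inter F ->
  kfam k F -> G2prop F -> A0 \in F ->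
  exists x, forall D : {set 'I_n}, #|D| = k -> (D \in F) = (x \in D).
Proof.
move=> k1 kn iF kF Gp A0F.
case: (@arg_minnP _ (A0, A0) (fun p => (p.1 \in F) && (p.2 \in F))
        (fun p => #|p.1 :&: p.2|)) => [|[A B] /= /andP [AF BF] hmin].
  by rewrite /= A0F.
have : A :&: B != set0 by rewrite setI_eq0; exact: iF.
case/set0Pn => x; rewrite inE => /andP [xA xB].
have u : uq A B x.
  split => // z zA zB; apply/eqP; apply/negPn/negP => zx.
  have c2 : 1 < #|~: (A :|: B)|.
    have : 1 < #|A :&: B|.
      by apply/card_gt1P; exists z, x; rewrite !inE zA zB xA xB.
    have := comp_card A B; rewrite (kF _ AF) (kF _ BF); move: (kn); clia.
  have [y1 [y2 [h1 h2 h3]]] := two_out c2.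
  move: h1 h2; rewrite !in_setU !negb_or => /andP [y1A y1B] /andP [y2A y2B].
  have [h|h] := Gp A x z y1 y2 AF xA zA ltac:(by rewrite eq_sym) y1A y2A h3.
  - have := hmin (swp A x y1, B); rewrite /= h BF => /(_ isT).
    by rewrite leqNgt swp_inter.
  - have := hmin (swp A z y2, B); rewrite /= h BF => /(_ isT).
    by rewrite leqNgt swp_inter.
have Fx : forall D : {set 'I_n}, x \in D -> #|D| = k -> D \in F.
  by move=> D xD Dk; apply: (grow kn iF kF Gp (erefl #|D :\: A|) AF BF u).
exists x => D Dk; apply/idP/idP; last by move=> xD; exact: Fx.
move=> DF; apply/negPn/negP => xD.
set R := ~: (x |: D).
have cR : k.-1 <= #|R|.
  rewrite /R; have := cardsC (x |: D); rewrite cardsU1 xD Dk card_ord /=; move: (kn); clia.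
have : 0 < #|[set S : {set 'I_n} | S \subset R & #|S| == k.-1]|.
  by rewrite cards_draws bin_gt0.
case/card_gt0P => S; rewrite inE => /andP [SR /eqP Sk].
have xS : x \notin S.
  by apply/negP => /(subsetP SR); rewrite !inE eqxx.
have := iF _ _ (Fx (x |: S) (setU11 x S) ltac:(rewrite cardsU1 xS Sk; move: (k1); clia)) DF.
case/negP; apply/pred0P => z /=; rewrite !inE.
apply/negP => /andP [/orP [/eqP ->|zS] zD]; first by rewrite zD in xD.
by move/subsetP: SR => /(_ z zS); rewrite !inE zD orbT.
Qed.

Lemma sum_part n k : 0 < k -> k + k <= n ->
  ('C(n - 1, k - 1) != \sum_(1 <= t < k) 'C(k, t) * 'C(n - k - 1, k - 1 - t)
                         %[mod 2]) = odd 'C(n - k - 1, k - 1).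
Proof.
case: k => // k _ kn.
have V := Vandermonde k.+1 (n - k.+1 - 1) k.
rewrite -(big_mkord xpredT (fun j => 'C(k.+1, j) * 'C(n - k.+1 - 1, k - j))) in V.
rewrite big_ltn // bin0 mul1n subn0 in V.
have e2 : k.+1 + (n - k.+1 - 1) = n - 1 by move: (kn); clia.
have e1 : k.+1 - 1 = k by rewrite subn1.
rewrite e2 in V; rewrite e1 -V !modn2 oddD.
by case: (odd 'C(n - k.+1 - 1, k)); case: (odd _).
Qed.

Lemma count_star n (R : {set 'I_n}) c k : c \notin R ->
  #|[set B : {set 'I_n} | [&& #|B| == k.+1, c \in B & B :\ c \subset R]]| = 'C(#|R|, k).
Proof.
move=> cR; rewrite -cards_draws -[RHS](@card_in_imset _ _ (fun S => c |: S)).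
  apply: eq_card => B; rewrite [in LHS]inE; apply/idP/imsetP.
  - case/and3P => /eqP Bk cB BR; exists (B :\ c); last by rewrite setD1K.
    by rewrite inE BR /=; have := cardsD1 c B; rewrite cB Bk /=; clia.
  - case=> S; rewrite inE => /andP [SR /eqP Sk] ->.
    have cS : c \notin S by apply: contra cR => /(subsetP SR).
    by rewrite cardsU1 cS Sk setU11 (setU1K cS) SR /= add1n eqxx.
move=> S1 S2; rewrite !inE => /andP [S1R _] /andP [S2R _] e.
have c1 : c \notin S1 by apply: contra cR => /(subsetP S1R).
have c2 : c \notin S2 by apply: contra cR => /(subsetP S2R).
by rewrite -(setU1K c1) -(setU1K c2) e.
Qed.

Lemma card_KGV n k (P : pred {set 'I_n}) :
  #|[set A : KGV n k | P (val A)]| = #|[set B : {set 'I_n} | (#|B| == k) && P B]|.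
Proof.
rewrite -(card_imset _ val_inj); apply: eq_card => B; rewrite inE.
apply/imsetP/andP => [[A]|[hk PB]].
  by rewrite inE => PA ->; split => //; exact: (valP A).
by exists (exist _ B hk); rewrite ?inE.
Qed.

Definition FS n k (S : {set KGV n k}) : {set {set 'I_n}} := [set val A | A in S].

Lemma card_FS n k (S : {set KGV n k}) : #|FS S| = #|S|.
Proof. by rewrite card_imset //; exact: val_inj. Qed.

Lemma kfam_FS n k (S : {set KGV n k}) : kfam k (FS S).
Proof. by move=> A' /imsetP [A _ ->]; apply/eqP; exact: (valP A). Qed.

Lemma indepP n k (S : {set KGV n k}) : independent (@KGadj n k) S ->
  forall A B, A \in S -> B \in S -> ~~ [disjoint val A & val B].
Proof.
move=> h A B AS BS.
by move/forallP: h => /(_ A) /implyP /(_ AS) /forallP /(_ B) /implyP /(_ BS).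
Qed.

Lemma inter_FS n k (S : {set KGV n k}) : independent (@KGadj n k) S -> inter (FS S).
Proof.
move=> h A' B' /imsetP [A AS ->] /imsetP [B BS ->]; exact: (indepP h AS BS).
Qed.

Lemma indep_bound n k (S : {set KGV n k}) : 0 < k -> k + k <= n ->
  independent (@KGadj n k) S -> #|S| <= 'C(n.-1, k.-1).
Proof.
move=> k0 kn h; rewrite -card_FS.
by have [] := EKR k0 kn (inter_FS h) (@kfam_FS n k S).
Qed.

Definition Sc n k (c : 'I_n) : {set KGV n k} := [set A : KGV n k | c \in val A].

Lemma Sc_indep n k (c : 'I_n) : independent (@KGadj n k) (Sc k c).
Proof.
apply/forallP => A; apply/implyP; rewrite inE => cA.
apply/forallP => B; apply/implyP; rewrite inE => cB.
apply/negP => /pred0P /(_ c) /=; by rewrite cA cB.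
Qed.

Lemma card_Sc n k (c : 'I_n) : 0 < k -> #|Sc k c| = 'C(n.-1, k.-1).
Proof.
move=> k0; rewrite /Sc (@card_KGV n k (fun B => c \in B)).
have cR : c \notin ~: [set c] by rewrite !inE eqxx.
have hR : #|~: [set c]| = n.-1 by rewrite cardsC1 card_ord.
rewrite -hR -(@count_star _ _ _ k.-1 cR).
apply: eq_card => B; rewrite !inE prednK //; congr (_ && _).
case: (c \in B) => //=; apply/esym/subsetP => z; rewrite !inE.
by case/andP.
Qed.

Lemma nbr_Sc n k (c : 'I_n) (v : KGV n k) : 0 < k -> k < n -> c \notin val v ->
  #|[set u in Sc k c | KGadj v u]| = 'C(n - k - 1, k.-1).
Proof.
move=> k0 kn cv.
have -> : [set u in Sc k c | KGadj v u] =
          [set u : KGV n k | (c \in val u) && [disjoint val v & val u]].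
  by apply/setP => u; rewrite !inE.
rewrite (@card_KGV n k (fun B => (c \in B) && [disjoint val v & B])).
have cR : c \notin ~: (c |: val v) by rewrite !inE eqxx.
have hR : #|~: (c |: val v)| = n - k - 1.
  have := cardsC (c |: val v); rewrite cardsU1 cv (eqP (valP v)) card_ord /=.
  move: (kn); clia.
rewrite -hR -(@count_star _ _ _ k.-1 cR).
apply: eq_card => B; rewrite !inE prednK //; congr (_ && _).
case cB : (c \in B) => //=.
apply/pred0P/subsetP => [h z|h z] /=.
  rewrite !inE => /andP [zc zB]; rewrite negb_or zc /=.
  by apply/negP => zv; have := h z; rewrite /= zv zB.
apply/negP => /andP [zv zB].
have zc : z != c by apply: contra cv => /eqP <-.
by have := h z; rewrite !inE zc zB zv orbT => /(_ isT).
Qed.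

Lemma exists_avoid n k (c : 'I_n) : k < n -> exists v : KGV n k, c \notin val v.
Proof.
move=> kn.
have : 0 < #|[set V : {set 'I_n} | V \subset ~: [set c] & #|V| == k]|.
  rewrite cards_draws bin_gt0 cardsC1 card_ord; move: (kn); clia.
case/card_gt0P => V; rewrite inE => /andP [VR hV].
exists (exist _ V hV) => /=; apply/negP => /(subsetP VR); by rewrite !inE eqxx.
Qed.

Lemma max_is_star n k (S : {set KGV n k}) : 1 < k -> k + k < n ->
  independent (@KGadj n k) S -> #|S| = 'C(n.-1, k.-1) -> exists c, S = Sc k c.
Proof.
move=> k1 kn h cS.
have iF := inter_FS h. have kF := @kfam_FS n k S.
have eF : #|FS S| = 'C(n.-1, k.-1) by rewrite card_FS.
have Gp : G2prop (FS S).
  move=> A x1 x2 y1 y2 AF x1A x2A x12 y1A y2A y12.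
  exact: (G2 k1 kn iF kF eF AF x1A x2A x12 y1A y2A y12).
have : 0 < #|FS S| by rewrite eF bin_gt0; move: (kn); clia.
case/card_gt0P => A0 A0F.
have [c hc] := star k1 kn iF kF Gp A0F.
exists c; apply/setP => A; rewrite inE -(hc (val A)); last exact/eqP/(valP A).
by rewrite mem_imset //; exact: val_inj.
Qed.

Theorem theorem2 (n k : nat) (hk : 2 <= k) (hn : 2 * k <= n) :
  (alpha_od (@KGadj n k) = alpha (@KGadj n k) <-> odd 'C(n - k - 1, k - 1))
  /\
  (alpha_od (@KGadj n k) = alpha (@KGadj n k) <->
     'C(n - 1, k - 1) != \sum_(1 <= t < k) 'C(k, t) * 'C(n - k - 1, k - 1 - t)
                         %[mod 2]).
Proof.
have k0 : 0 < k by move: (hk); clia.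
have kn : k + k <= n by move: (hn); clia.
have k1 : 1 < k by [].
have n0 : 0 < n by move: (kn) (k0); clia.
have kltn : k < n by move: (kn) (k0); clia.
pose c0 : 'I_n := Ordinal n0.
have e1 : n - 1 = n.-1 by rewrite subn1.
have e2 : k - 1 = k.-1 by rewrite subn1.
have ha : alpha (@KGadj n k) = 'C(n.-1, k.-1).
  apply/eqP; rewrite eqn_leq; apply/andP; split.
    by apply/bigmax_leqP => S hS; exact: indep_bound.
  by apply: (bigmax_sup (Sc k c0)); [exact: Sc_indep | rewrite card_Sc].
have hod : alpha_od (@KGadj n k) <= alpha (@KGadj n k).
  apply/bigmax_leqP => S /andP [hS _]; exact: leq_bigmax_cond.
have nbr : forall c (v : KGV n k), c \notin val v ->
    #|[set u in Sc k c | KGadj v u]| = 'C(n - k - 1, k - 1).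
  by move=> c v cv; rewrite nbr_Sc // e2.
have main : alpha_od (@KGadj n k) = alpha (@KGadj n k) <-> odd 'C(n - k - 1, k - 1).
  split.
  - move=> e; apply/negPn/negP => ev.
    have [e2k|ne2k] := eqVneq n (k + k).
      move: ev; rewrite e2k (_ : k + k - k - 1 = k - 1) ?binn //; move: (k0); clia.
    have kn' : k + k < n by move: (kn) ne2k; clia.
    have P0 : odd_independent (@KGadj n k) set0.
      apply/andP; split; first by apply/forallP => x; rewrite inE.
      apply/forallP => v; apply/implyP => _; apply/orP; left.
      by rewrite cards_eq0; apply/eqP/setP => u; rewrite !inE.
    case: (@arg_maxnP _ set0 (odd_independent (@KGadj n k)) (fun S => #|S|) P0)
      => S PS hmax.
    have cS : #|S| = 'C(n.-1, k.-1).
      apply/eqP; rewrite eqn_leq; apply/andP; split.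
        by apply: indep_bound => //; case/andP: PS.
      rewrite -ha -e; apply/bigmax_leqP => j; exact: hmax.
    have [c eS] := max_is_star k1 kn' (proj1 (andP PS)) cS.
    have [v cv] := exists_avoid c kltn.
    case/andP: PS => _ /forallP /(_ v) /implyP.
    have vS : v \in ~: S by rewrite eS !inE.
    move/(_ vS); rewrite eS nbr // (negbTE ev) orbF => /eqP h0.
    have : 0 < 'C(n - k - 1, k - 1) by rewrite bin_gt0; move: (kn') (k0); clia.
    by rewrite h0.
  - move=> od; apply/eqP; rewrite eqn_leq hod /= ha.
    apply: (bigmax_sup (Sc k c0)); last by rewrite card_Sc.
    apply/andP; split; first exact: Sc_indep.
    apply/forallP => v; apply/implyP; rewrite !inE => cv.
    by rewrite nbr // od orbT.
split => //.
by rewrite sum_part.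
Qed.
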